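(* Let $X$ be an extensible marked Dynkin diagram with $d$ nodes, let $n\ge d$ with $\det(X_n)\ne0$, let $R=\mathbb Z/\det(X_n)\mathbb Z$, and let $b_1,\dots,b_n\in R$ be such that $(-\Delta)\,\omega_i^{(n)}\equiv b_i\,\overline{\omega}_1^{(n)}\pmod{Q(X_n)}$ for $i=1,\dots,n$. Put $b=(b_1,\dots,b_n)^T\in R^n$ and let $A=C(X_n)$, viewed as a matrix over $R$. Then: (i) $A^Tb=0$ in $R^n$; (ii) if $x\in R^n$ satisfies $A^Tx=0$, then $x$ is a multiple of $b$; (iii) $b$ is the unique element of $R^n$ such that $A^Tb=0$ and $b_n=-\Delta+\det(X_n)\mathbb Z$.
   Context: A marked Dynkin diagram $X$ has nodes $1,\dots,d$ with node $d$ distinguished and symmetrizable generalized Cartan matrix $C(X)$. For $n\ge d$, $X_n$ is obtained by attaching a simply-laced chain of new nodes $d+1,\dots,n$ to node $d$ (so $C(X_n)$ has $C(X)$ as upper-left block, $2$ on the remaining diagonal, $-1$ in positions $(i,i+1),(i+1,i)$ for $d\le i<n$, $0$ elsewhere). $\det(Y)$ is the determinant of the generalized Cartan matrix of $Y$. The sequence $\det(X_n)$, $n\ge d$, is arithmetic with common difference $\Delta$; $X$ is extensible if $\Delta\ne0$, $\det(X)\ne0$ and $\gcd(\Delta,\det X)=1$. For $\mathfrak g(X_n)$: simple roots $\alpha_i^{(n)}$, coroots $\check\alpha_i^{(n)}$ with $\alpha_j^{(n)}(\check\alpha_i^{(n)})=C(X_n)_{ij}$, root lattice $Q(X_n)$,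 weight lattice $P(X_n)$, fundamental weights $\omega_i^{(n)}$ with $\omega_i^{(n)}(\check\alpha_j^{(n)})=\delta_{ij}$, $\overline{\omega}_1^{(n)}=\omega_n^{(n)}$. When $\det(X_n)\ne0$, $P(X_n)/Q(X_n)$ is cyclic of order $|\det(X_n)|$ generated by $[\overline{\omega}_1^{(n)}]$, so multiplying $\overline{\omega}_1^{(n)}$ by an element of $R$ is well defined modulo $Q(X_n)$. *)

(* Defs.v *)
From HB Require Import structures.
From mathcomp Require Import all_boot all_order all_algebra.
Set Implicit Arguments. Unset Strict Implicit. Unset Printing Implicit Defensive.
Import Order.TTheory GRing.Theory Num.Theory.
Local Open Scope ring_scope.

(* Nodes are 0-indexed: paper node k is index k-1.  The distinguished
   node d of X is index d-1. *)

Definition is_GCM (k : nat) (A : 'M[int]_k) : Prop :=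
  [/\ (forall i, A i i = 2),
      (forall i j, i != j -> A i j <= 0) &
      (forall i j, A i j = 0 <-> A j i = 0)].

Definition symmetrizable (k : nat) (A : 'M[int]_k) : Prop :=
  exists e : 'rV[rat]_k, (forall i, 0 < e 0 i) /\
    diag_mx e *m map_mx (fun z : int => z%:~R) A
    = (diag_mx e *m map_mx (fun z : int => z%:~R) A)^T.

(* C(X_n): C(X) as upper-left block, a simply-laced chain d+1,...,n
   attached to node d. *)
Definition ext_mx (d : nat) (C : 'M[int]_d) (n : nat) : 'M[int]_n :=
  \matrix_(i < n, j < n)
    match (insub (val i) : option 'I_d), (insub (val j) : option 'I_d) with
    | Some i', Some j' => C i' j'
    | _, _ =>
      if val i == val j then 2
      else if ((val i).+1 == val j) && (d <= val j)%N
              || ((val j).+1 == val i) && (d <= val i)%N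
           then -1 else 0
    end.

Definition detX (d : nat) (C : 'M[int]_d) (n : nat) : int := \det (ext_mx C n).

(* common difference Delta of the arithmetic sequence det(X_n), n >= d *)
Definition Delta (d : nat) (C : 'M[int]_d) : int := detX C d.+1 - detX C d.

Definition extensible (d : nat) (C : 'M[int]_d) : Prop :=
  [/\ Delta C != 0, \det C != 0 & coprimez (Delta C) (\det C)].

(* Weight lattice P(X_n) realized as Z^n in the basis of fundamental weights
   omega_i (omega_i(coroot_j) = delta_ij); the simple root alpha_j then has
   coordinates alpha_j(coroot_i) = C_ij, i.e. column j of C(X_n). *)
Definition fund_weight (n : nat) (i : 'I_n) : 'cV[int]_n := delta_mx i 0.

Definition simple_root (n : nat) (A : 'M[int]_n) (j : 'I_n) : 'cV[int]_n :=
  col j A.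

Definition in_root_lattice (n : nat) (A : 'M[int]_n) (v : 'cV[int]_n) : Prop :=
  exists c : 'I_n -> int, v = \sum_j c j *: simple_root A j.

(* Main.v *)
Require Import Defs.
From HB Require Import structures.
From mathcomp Require Import all_boot all_order all_algebra.
From mathcomp Require Import ring.
Set Implicit Arguments. Unset Strict Implicit. Unset Printing Implicit Defensive.
Import Order.TTheory GRing.Theory Num.Theory.
Local Open Scope ring_scope.

Definition ee d (C : 'M[int]_d) (i j : nat) : int :=
    match (insub i : option 'I_d), (insub j : option 'I_d) with
    | Some i', Some j' => C i' j'
    | _, _ =>
      if i == j then 2
      else if ((i).+1 == j) && (d <= j)%N
              || ((j).+1 == i) && (d <= i)%N
           then -1 else 0
    end.

Lemma ext_mxE d (C : 'M[int]_d) n i j : ext_mx C n i j = ee C i j.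
Proof. by rewrite mxE. Qed.

Lemma ee_hi d (C : 'M[int]_d) i j : (d <= i)%N ->
  ee C i j = if i == j then 2 else if (i.+1 == j) || (j.+1 == i) then -1 else 0.
Proof.
move=> h; rewrite /ee insubF /=; last by rewrite ltnNge h.
rewrite h andbT; case: (i.+1 =P j) => [<-|] //=.
by rewrite (leq_trans h (leqnSn _)).
Qed.

Lemma ee_hj d (C : 'M[int]_d) i j : (d <= j)%N ->
  ee C i j = if i == j then 2 else if (i.+1 == j) || (j.+1 == i) then -1 else 0.
Proof.
move=> h; have hj : (insub j : option 'I_d) = None by rewrite insubF // ltnNge h.
rewrite /ee hj.
have -> : ((i.+1 == j) && (d <= j)%N || (j.+1 == i) && (d <= i)%N)
   = (i.+1 == j) || (j.+1 == i).
  rewrite h andbT; case: (j.+1 =P i) => [<-|] /=; first by rewrite (leq_trans h (leqnSn _)) orbT.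
  by rewrite orbF.
by case: (insub i).
Qed.

Lemma ext_d d (C : 'M[int]_d) : ext_mx C d = C.
Proof. by apply/matrixP => i j; rewrite mxE !valK. Qed.

Lemma sub_ext d (C : 'M[int]_d) k :
  row' ord_max (col' ord_max (ext_mx C k.+1)) = ext_mx C k.
Proof.
apply/matrixP => i j; rewrite !mxE -/(ee C _ _) -/(ee C _ _).
have v1 : \val (lift ord_max i) = \val i := lift_max i.
have v2 : \val (lift ord_max j) = \val j := lift_max j.
by rewrite v1 v2.
Qed.

Lemma sign_even k : (-1) ^+ (k + k) = 1 :> int.
Proof. by rewrite -signr_odd addnn odd_double. Qed.

Lemma lift_inord_aux k (j : 'I_k) :
  \val (lift (inord k : 'I_k.+2) (lift ord_max j : 'I_k.+1)) = \val j.
Proof.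
have jl := ltn_ord j.
rewrite /= /bump inordK //.
have -> : (k <= j)%N = false by rewrite leqNgt jl.
by rewrite add0n leqNgt jl.
Qed.

Lemma rec_ext d (C : 'M[int]_d) k : (d <= k.+1)%N ->
  \det (ext_mx C k.+2) = 2 * \det (ext_mx C k.+1) - \det (ext_mx C k).
Proof.
move=> hd.
rewrite (expand_det_row _ ord_max) (bigD1 ord_max) //= (bigD1 (inord k)) /=; last first.
  by apply/eqP => /(congr1 val) /=; rewrite inordK // => /n_Sn.
rewrite big1 ?addr0; last first.
  move=> j /andP [jn jk]; rewrite ext_mxE ee_hi //=.
  have jl := ltn_ord j.
  have -> : (k.+1 == j) = false by apply/negbTE; apply: contra jn => /eqP e; apply/eqP/val_inj.
  have -> : (k.+2 == j) = false by apply/negbTE; rewrite neq_ltn jl orbT.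
  have -> : (j.+1 == k.+1) = false.
    by apply/negbTE; apply: contra jk => /eqP [e]; apply/eqP/val_inj; rewrite /= inordK.
  by rewrite mul0r.
rewrite !ext_mxE !ee_hi //= inordK //.
rewrite (_ : (k.+1 == k.+1) = true); last exact: eqxx.
rewrite (_ : (k.+1 == k) = false); last by rewrite eqn_leq ltnn.
rewrite orbT.
rewrite /cofactor /= inordK // sub_ext sign_even mul1r.
set M := row' _ _.
have v2 : \val (lift (inord k : 'I_k.+2) (ord_max : 'I_k.+1)) = k.+1.
  by rewrite /= /bump inordK // leqnn.
rewrite (expand_det_col M ord_max) (bigD1 ord_max) //= big1 ?addr0; last first.
  move=> i ni; rewrite /M !mxE -/(ee C _ _).
  have v1 : \val (lift ord_max i) = \val i := lift_max i.
  rewrite v1 v2 ee_hj //.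
  have il := ltn_ord i.
  have -> : (val i == k.+1) = false by apply/negbTE; rewrite neq_ltn il.
  have -> : ((val i).+1 == k.+1) = false by apply/negbTE; apply: contra ni => /eqP [e]; apply/eqP/val_inj.
  have -> : (k.+2 == val i) = false by apply/negbTE; rewrite neq_ltn (ltn_trans il (ltnSn _)) orbT.
  by rewrite mul0r.
have -> : M ord_max ord_max = -1.
  rewrite /M !mxE -/(ee C _ _) v2 ee_hj //.
  have v1 : \val (lift ord_max (ord_max : 'I_k.+1)) = k := lift_max _.
  rewrite v1 ifF; last by apply/eqP/n_Sn.
  by rewrite (_ : (k.+1 == k.+1) = true) //; exact: eqxx.
have E : row' ord_max (col' ord_max M) = ext_mx C k.
  apply/matrixP => i j; rewrite /M !mxE -/(ee C _ _) -/(ee C _ _).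
  have v1 : \val (lift ord_max (lift ord_max i)) = \val i := etrans (lift_max _) (lift_max i).
  have v4 : \val (lift ord_max j) = \val j := lift_max j.
  have v3 : \val (lift (inord k : 'I_k.+2) (lift ord_max j)) = \val j.
    have jl : (nat_of_ord j < k)%N := ltn_ord j.
    exact: lift_inord_aux.
  by rewrite v1 v3.
rewrite /cofactor E /= sign_even.
rewrite (_ : (-1) ^+ (k.+1 + k) = -1 :> int); last first.
  by rewrite -signr_odd addSn addnn /= odd_double.
ring.
Qed.

Lemma step_ext d (C : 'M[int]_d) (d0 : (0 < d)%N) t :
  \det (ext_mx C (d.-1 + t).+1) = \det (ext_mx C (d.-1 + t)) + Delta C.
Proof.
elim: t => [|t IH].
  rewrite addn0 /Delta /detX.
  have := @rec_ext d C d.-1; rewrite prednK // => -> //.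
  ring.
rewrite addnS rec_ext ?IH; first ring.
by rewrite -addSn prednK // leq_addr.
Qed.

Lemma det_extD d (C : 'M[int]_d) (d0 : (0 < d)%N) t :
  \det (ext_mx C (d + t)) = \det C + t%:Z * Delta C.
Proof.
elim: t => [|t IH]; first by rewrite addn0 ext_d mul0r addr0.
have := step_ext C d0 t.+1.
rewrite (_ : (d.-1 + t.+1 = d + t)%N); last by rewrite addnS -addSn prednK.
rewrite addnS => ->; rewrite IH -addn1 PoszD; ring.
Qed.

Lemma bez_aux (s t Dl D xi xn bi : int) : s * Dl + t * D = 1 ->
  xi - - s * xn * bi = - s * (- Dl * xi - bi * xn) + (t * xi) * D.
Proof.
move=> h; apply/eqP; rewrite -subr_eq0; apply/eqP.
transitivity (xi * (1 - (s * Dl + t * D))); first ring.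
by rewrite h subrr mulr0.
Qed.

Lemma bez_aux2 (s t Dl D z : int) : s * Dl + t * D = 1 ->
  z = s * (Dl * z) + (t * z) * D.
Proof.
move=> h; apply/eqP; rewrite -subr_eq0; apply/eqP.
transitivity (z * (1 - (s * Dl + t * D))); first ring.
by rewrite h subrr mulr0.
Qed.

Theorem lemma3p5 (d : nat) (C : 'M[int]_d) (m : nat) (b : 'cV[int]_m.+1) :
  (0 < d)%N -> is_GCM C -> symmetrizable C -> extensible C ->
  (d <= m.+1)%N ->
  detX C m.+1 != 0 ->
  (forall i : 'I_m.+1, in_root_lattice (ext_mx C m.+1)
      ((- Delta C) *: fund_weight i - b i ord0 *: fund_weight ord_max)) ->
  let A := ext_mx C m.+1 in
  let D := detX C m.+1 in
  [/\ (forall i, ((A^T *m b) i ord0 = 0 %[mod D])%Z),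
      (forall x : 'cV[int]_m.+1,
         (forall i, ((A^T *m x) i ord0 = 0 %[mod D])%Z) ->
         exists c : int, forall i, (x i ord0 = c * b i ord0 %[mod D])%Z) &
      ((b ord_max ord0 = - Delta C %[mod D])%Z /\
       forall y : 'cV[int]_m.+1,
         (forall i, ((A^T *m y) i ord0 = 0 %[mod D])%Z) ->
         (y ord_max ord0 = - Delta C %[mod D])%Z ->
         forall i, (y i ord0 = b i ord0 %[mod D])%Z)].
Proof.
move=> d0 _ _ [_ _ cop] dm Dn0 Hroot A D.
set Dl := Delta C.
have hD : D = \det C + (m.+1 - d)%N%:Z * Dl.
  by have := det_extD C d0 (m.+1 - d); rewrite subnKC.
have hU : \adj A ord_max ord_max = D - Dl.
  rewrite mxE /cofactor sign_even /A sub_ext mul1r.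
  have := step_ext C d0 (m - d.-1); rewrite subnKC; last by rewrite -ltnS prednK.
  by rewrite /D /detX => ->; rewrite /Dl; ring.
have [s [t hst]] : exists s t, s * Dl + t * D = 1.
  case/coprimezP: cop => [[u v]] /= e.
  exists (u - v * (m.+1 - d)%N%:Z), v; rewrite hD -e /Dl; ring.
have cD : forall z, (D %| Dl * z)%Z -> (D %| z)%Z.
  move=> z h; rewrite (bez_aux2 z hst); apply: rpredD; first exact: dvdz_mull.
  exact: dvdz_mull (dvdzz D).
have cU : forall z, (D %| (D - Dl) * z)%Z -> (D %| z)%Z.
  move=> z h; apply: cD.
  have -> : Dl * z = D * z - (D - Dl) * z by ring.
  by apply: rpredB => //; apply: dvdz_mulr.
have key : forall i k, (D %| - Dl * \adj A k i - b i ord0 * \adj A k ord_max)%Z.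
  move=> i k; case: (Hroot i) => c Hc.
  have E : \adj A *m ((- Dl) *: fund_weight i - b i ord0 *: fund_weight ord_max)
           = D *: \col_j c j.
    rewrite Hc.
    have -> : \sum_j c j *: simple_root A j = A *m \col_j c j.
      apply/matrixP => r q; rewrite summxE mxE; apply: eq_bigr => j _.
      by rewrite !mxE mulrC.
    by rewrite mulmxA mul_adj_mx mul_scalar_mx.
  have := congr1 (fun M : 'M[int]_(m.+1,1) => M k ord0) E.
  rewrite mulmxBr -!scalemxAr /fund_weight -!colE !mxE => ->.
  exact: dvdz_mulr.
have L2 : forall x : 'cV[int]_m.+1,
    (forall j, (D %| (A^T *m x) j ord0)%Z) ->
    forall i, (D %| - Dl * x i ord0 - b i ord0 * x ord_max ord0)%Z.
  move=> x hx.
  pose w := \col_j (((A^T *m x) j ord0) %/ D)%Z.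
  have hw : A^T *m x = D *: w.
    apply/matrixP => j q; rewrite [RHS]mxE [w _ _]mxE (ord1 q) mulrC divzK //.
  have hx2 : forall i, x i ord0 = \sum_k w k ord0 * \adj A k i.
    move=> i; apply: (mulfI Dn0).
    have e : D *: x^T = D *: (w^T *m \adj A).
      rewrite scalemxAl.
      have -> : D *: w^T = (D *: w)^T by apply/matrixP => p q; rewrite !mxE.
      rewrite -hw trmx_mul trmxK.
      by rewrite -mulmxA mul_mx_adj mul_mx_scalar.
    have := congr1 (fun M : 'M[int]_(1,m.+1) => M ord0 i) e; rewrite !mxE => ->.
    congr (_ * _); apply: eq_bigr => k _; rewrite !mxE.
    by [].
  move=> i; rewrite !hx2 !mulr_sumr -sumrB; apply: rpred_sum => k _.
  have -> : - Dl * (w k ord0 * \adj A k i) - b i ord0 * (w k ord0 * \adj A k ord_max)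
      = w k ord0 * (- Dl * \adj A k i - b i ord0 * \adj A k ord_max) by ring.
  exact: dvdz_mull.
have conv : forall x : 'cV[int]_m.+1,
    (forall i, ((A^T *m x) i ord0 = 0 %[mod D])%Z) ->
    (forall j, (D %| (A^T *m x) j ord0)%Z).
  by move=> x hx j; move: (hx j) => /eqP; rewrite eqz_mod_dvd subr0.
split.
- move=> j; apply/eqP; rewrite eqz_mod_dvd subr0; apply: cU; rewrite -hU.
  have -> : \adj A ord_max ord_max * (A^T *m b) j ord0 =
      \sum_i A i j * - (- Dl * \adj A ord_max i - b i ord0 * \adj A ord_max ord_max)
      - Dl * (\adj A *m A) ord_max j.
    rewrite [(A^T *m b) _ _]mxE [(\adj A *m A) _ _]mxE !mulr_sumr -sumrB.
    by apply: eq_bigr => i _; rewrite !mxE; ring.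
  apply: rpredB.
    by apply: rpred_sum => i _; apply: dvdz_mull; rewrite rpredN; exact: key.
  rewrite mul_adj_mx mxE; apply: dvdz_mull; apply: rpredMn; exact: dvdzz.
- move=> x hx; exists (- s * x ord_max ord0) => i.
  apply/eqP; rewrite eqz_mod_dvd (bez_aux _ _ _ hst).
  apply: rpredD; last exact: dvdz_mull (dvdzz D).
  by apply: dvdz_mull; apply: L2; apply: conv.
split.
- apply/eqP; rewrite eqz_mod_dvd; apply: cU; rewrite -hU.
  have -> : \adj A ord_max ord_max * (b ord_max ord0 - - Dl)
     = - (- Dl * \adj A ord_max ord_max - b ord_max ord0 * \adj A ord_max ord_max) by ring.
  by rewrite rpredN.
move=> y hy hyn i; apply/eqP; rewrite eqz_mod_dvd; apply: cD.
move: hyn => /eqP; rewrite eqz_mod_dvd => hyn.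
have -> : Dl * (y i ord0 - b i ord0) =
   - (- Dl * y i ord0 - b i ord0 * y ord_max ord0) - b i ord0 * (y ord_max ord0 - - Dl) by ring.
apply: rpredB; last exact: dvdz_mull.
by rewrite rpredN; apply: L2; apply: conv.
Qed.
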